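(* Let $G$ be a finite group, $\mathbb{F}$ an algebraically closed field of characteristic $p\ge0$, $A=\mathbb{F}G$, and $V$ an $\mathbb{F}G$-module of dimension $n$. For any $p$-regular element $g\in G$, let $\mathbf{s}(g)=(\chi_{S_1}(g),\dots,\chi_{S_{\ell+1}}(g))^T\in\mathbb{C}^{\ell+1}$. Then $\mathbf{s}(g)^TM_V=\chi_V(g)\,\mathbf{s}(g)^T$ and $\mathbf{s}(g)^TL_V=(n-\chi_V(g))\,\mathbf{s}(g)^T$.
   Context: $S_1,\dots,S_{\ell+1}$ are the pairwise non-isomorphic simple $\mathbb{F}G$-modules; modules are finite-dimensional, and $G$ acts diagonally on tensor products. $M_V$ has entries $(M_V)_{i,j}=[S_j\otimes V:S_i]$ (composition multiplicities) and $L_V=nI_{\ell+1}-M_V$. An element is $p$-regular if its order is invertible in $\mathbb{F}$. Writing $\#G=p^aq$ with $\gcd(p,q)=1$ ($q=\#G$ if $p=0$) and fixing an isomorphism $\lambda\mapsto\widehat\lambda$ from $q$-th roots of unity in $\mathbb{F}$ to those in $\mathbb{C}$, the Brauer character of a module $W$ at a $p$-regular $g$ with eigenvalues $\lambda_1,\dots,\lambda_m$ on $W$ is $\chi_W(g)=\sum_i\widehat{\lambda_i}$. *)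

(* Defs.v *)
From HB Require Import structures.
From mathcomp Require Import all_boot all_order all_fingroup all_algebra all_solvable all_field.
From mathcomp Require Import all_character.
From Stdlib Require Import ClassicalEpsilon.
Set Implicit Arguments. Unset Strict Implicit. Unset Printing Implicit Defensive.
Import GRing.Theory Num.Theory.
Local Open Scope ring_scope.

Definition fgmod (F : fieldType) (gT : finGroupType) (G : {group gT}) :=
  {k : nat & mx_representation F G k}.

(* [W : S] = k : there is a composition series U of the whole module W
   (last 0 U equals the full space 1%:M) in which exactly k composition
   factors are isomorphic (similar) to S. *)
Definition is_comp_mult (F : fieldType) (gT : finGroupType) (G : {group gT})
    m (rW : mx_representation F G m) k (rS : mx_representation F G k)
    (c : nat) : Prop :=
  exists (U : seq 'M[F]_m) (compU : mx_composition_series rW U),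
    (last 0 U :=: 1%:M)%MS /\
    exists A : {set 'I_(size U)},
      #|A| = c /\ forall i : 'I_(size U), i \in A <-> mx_rsim (series_repr i compU) rS.

(* The composition multiplicity [W : S] (well defined by Jordan-Hoelder). *)
Definition comp_mult (F : fieldType) (gT : finGroupType) (G : {group gT})
    m (rW : mx_representation F G m) k (rS : mx_representation F G k) : nat :=
  epsilon (inhabits 0%N) (is_comp_mult rW rS).

(* Brauer character of rW at g w.r.t. the lifting phi of roots of unity:
   sum of phi over the eigenvalues (with multiplicity) of rW g, i.e. over the
   roots of the characteristic polynomial of rW g. *)
Definition brauer_char (F : closedFieldType) (phi : F -> algC)
    (gT : finGroupType) (G : {group gT}) m (rW : mx_representation F G m)
    (g : gT) : algC :=
  \sum_(z <- sval (closed_field_poly_normal (char_poly (rW g)))) phi z.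

(* q = p'-part of #|G| (q = #|G| in characteristic 0). *)
Definition pprime_order (F : fieldType) (gT : finGroupType) (G : {group gT}) : nat :=
  #|G|`_(predC [pchar F]).
Arguments pprime_order : clear implicits.

Definition MV (F : fieldType) (gT : finGroupType) (G : {group gT}) l
    (S : 'I_l.+1 -> fgmod F G) n (rV : mx_representation F G n) : 'M[algC]_l.+1 :=
  \matrix_(i, j) (comp_mult (prod_repr (projT2 (S j)) rV) (projT2 (S i)))%:R.

Definition LV (F : fieldType) (gT : finGroupType) (G : {group gT}) l
    (S : 'I_l.+1 -> fgmod F G) n (rV : mx_representation F G n) : 'M[algC]_l.+1 :=
  n%:R%:M - MV S rV.

(* s(g) as a row vector (its transpose s(g)^T). *)
Definition svec (F : closedFieldType) (phi : F -> algC) (gT : finGroupType)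
    (G : {group gT}) l (S : 'I_l.+1 -> fgmod F G) (g : gT) : 'rV[algC]_l.+1 :=
  \row_i brauer_char phi (projT2 (S i)) g.

(* Main.v *)
Require Import Defs.
From HB Require Import structures.
From mathcomp Require Import all_boot all_order all_fingroup all_algebra all_solvable all_field.
From mathcomp Require Import all_character.
Import GRing.Theory Num.Theory.
Set Implicit Arguments. Unset Strict Implicit. Unset Printing Implicit Defensive.
Local Open Scope ring_scope.
From Stdlib Require Import Classical ClassicalEpsilon.
Local Open Scope ring_scope.

Section Ev.
Variable F : fieldType.

Lemma prod_XsubC_perm (r1 r2 : seq F) :
  \prod_(z <- r1) ('X - z%:P) = \prod_(z <- r2) ('X - z%:P) -> perm_eq r1 r2.
Proof.
move=> H; rewrite /perm_eq; apply/allP => x _; apply/eqP.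
by rewrite -!mu_prod_XsubC H.
Qed.



Lemma cp_sim k m (A : 'M[F]_k) (B : 'M[F]_m) (P : 'M[F]_(k, m)) :
  k = m -> row_free P -> P *m B = A *m P -> char_poly A = char_poly B.
Proof.
move=> ekm; subst k => fP PB.
have Pu : P \in unitmx by rewrite -row_free_unit.
have -> : B = invmx P *m A *m P by rewrite -mulmxA -PB mulmxA mulVmx // mul1mx.
rewrite /char_poly /char_poly_mx.
have -> : map_mx polyC (invmx P *m A *m P) =
   map_mx polyC (invmx P) *m map_mx polyC A *m map_mx polyC P by rewrite !map_mxM.
have e1 : map_mx (@polyC F) (invmx P) *m map_mx polyC P = 1%:M.
  by rewrite -map_mxM mulVmx // map_mx1.
have eX : ('X%:M : 'M[{poly F}]_m) = map_mx polyC (invmx P) *m 'X%:M *m map_mx polyC P.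
  by rewrite mul_mx_scalar -scalemxAl e1 scalemx1.
rewrite [in RHS]eX.
rewrite -mulmxBl -mulmxBr !det_mulmx mulrAC -det_mulmx e1 det1 mul1r.
by [].
Qed.

Lemma cp_block k1 k2 (A1 : 'M[F]_k1) (A2 : 'M[F]_k2) Y :
  char_poly (block_mx A1 0 Y A2) = char_poly A1 * char_poly A2.
Proof.
rewrite /char_poly /char_poly_mx map_block_mx (scalar_mx_block k1 k2).
rewrite opp_block_mx add_block_mx raddf0 oppr0 addr0 det_lblock //.
Qed.

End Ev.

Lemma cp_inter (F : fieldType) k1 k2 m (A1 : 'M[F]_k1) (A2 : 'M[F]_k2) (B : 'M[F]_m)
   (P1 : 'M[F]_(k1, m)) (P2 : 'M[F]_(k2, m)) (Y : 'M[F]_(k2, k1)) :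
  (k1 + k2 = m)%N -> row_free (col_mx P1 P2) -> P1 *m B = A1 *m P1 ->
  P2 *m B = Y *m P1 + A2 *m P2 -> char_poly B = char_poly A1 * char_poly A2.
Proof.
move=> ek fP E1 E2; rewrite -(cp_block A1 A2 Y); symmetry.
apply: (cp_sim (P := col_mx P1 P2)) => //.
by rewrite mul_col_mx mul_block_col E1 E2 mul0mx addr0.
Qed.

Section EvC.
Variable F : closedFieldType.

Definition ev n (M : 'M[F]_n) : seq F := sval (closed_field_poly_normal (char_poly M)).

Lemma evE n (M : 'M[F]_n) : char_poly M = \prod_(z <- ev M) ('X - z%:P).
Proof.
rewrite /ev; case: closed_field_poly_normal => r /= Hr.
by rewrite {1}Hr (monicP (char_poly_monic _)) scale1r.
Qed.


Lemma ev_perm n (M : 'M[F]_n) r :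
  char_poly M = \prod_(z <- r) ('X - z%:P) -> perm_eq (ev M) r.
Proof. by move=> H; apply: prod_XsubC_perm; rewrite -evE. Qed.

End EvC.
Section Split.
Variables (F : fieldType) (gT : finGroupType) (G : {group gT}) (n : nat).
Variable rG : mx_representation F G n.

Lemma in_submodMl (U : 'M[F]_n) p q (A : 'M[F]_(p, q)) (M : 'M[F]_(q, n)) :
  in_submod U (A *m M) = A *m in_submod U M.
Proof. exact: (esym (mulmxA _ _ _)). Qed.
Lemma val_factmodMl (U : 'M[F]_n) p q (A : 'M[F]_(p, q)) (M : 'M[F]_(q, \rank (cokermx U))) :
  val_factmod (A *m M) = A *m val_factmod M.
Proof. exact: (esym (mulmxA _ _ _)). Qed.

Lemma cp_submod_split X Y (modX : mxmodule rG X) (modY : mxmodule rG Y) x :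
  x \in G -> (X <= Y)%MS ->
  char_poly (submod_repr modY x) =
  char_poly (submod_repr modX x) * char_poly (section_repr modX modY x).
Proof.
move=> Gx sXY.
set S := <<in_factmod X Y>>%MS.
set VX := @val_submod F n X _ 1%:M.
set VS := @val_submod F _ S _ 1%:M.
set T := val_factmod VS.
have sVXY : (VX <= Y)%MS by rewrite (submx_trans _ sXY) // val_submodP.
have sSY : (in_factmod X Y <= VS)%MS by rewrite /VS val_submod1 genmxE.
have sTY : (T <= Y)%MS.
  apply: submx_trans (_ : (val_factmod (in_factmod X Y) <= Y)%MS).
    by rewrite val_factmodS /VS (submx_trans (val_submodP _)) // genmxE.
  by rewrite -(in_factmodsK sXY) addsmxSr.
apply: (@cp_inter F _ _ _ _ _ _ (in_submod Y VX) (in_submod Y T)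
    (in_submod X (T *m rG x))).
- by rewrite genmxE addnC mxrank_in_factmod (addsmx_idPr sXY).
- rewrite /row_free -mul_col_mx mxrank_in_submod; last by rewrite col_mx_sub sVXY.
  apply/eqP/anti_leq/andP; split; first exact: rank_leq_row.
  rewrite -addsmxE.
  apply: (@leq_trans (\rank Y)).
    by rewrite genmxE addnC mxrank_in_factmod (addsmx_idPr sXY).
  apply: mxrankS; rewrite -(in_factmodsK sXY) addsmxS //.
    by rewrite /VX val_submod1.
  by rewrite /T val_factmodS.
- have -> : submod_repr modY x = submod_mx modY x by [].
  rewrite -in_submodJ // -in_submodMl; congr (in_submod Y _).
  by rewrite /VX -(val_submodJ modX) // mul1mx val_submodE.
have -> : submod_repr modY x = submod_mx modY x by [].
rewrite -in_submodJ // -!in_submodMl -linearD /=; congr (in_submod Y _).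
rewrite -{1}(add_sub_fact_mod X (T *m rG x)) val_submodE; congr (_ + _).
rewrite in_factmodJ // /T val_factmodK -val_factmodMl; congr val_factmod.
rewrite /VS -(val_submodJ (section_module modX modY)) // mul1mx val_submodE.
by [].
Qed.

End Split.
Section Series.
Variables (F : fieldType) (gT : finGroupType) (G : {group gT}) (n : nat).
Variable rG : mx_representation F G n.

Lemma cp0 k (A : 'M[F]_k) : k = 0%N -> char_poly A = 1.
Proof. by move=> e; subst k; rewrite /char_poly det_mx00. Qed.

Lemma cp_section_eq X1 Y1 X2 Y2 (mX1 : mxmodule rG X1) (mY1 : mxmodule rG Y1)
   (mX2 : mxmodule rG X2) (mY2 : mxmodule rG Y2) x :
  X1 = X2 -> Y1 = Y2 ->
  char_poly (section_repr mX1 mY1 x) = char_poly (section_repr mX2 mY2 x).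
Proof.
move=> e1 e2; subst X2 Y2.
by rewrite (bool_irrelevance mX1 mX2) (bool_irrelevance mY1 mY2).
Qed.

Lemma cp_series x : x \in G -> forall U (compU : mx_composition_series rG U)
   L (modL : mxmodule rG L), L = last 0 U ->
  char_poly (submod_repr modL x) = \prod_(i < size U) char_poly (series_repr i compU x).
Proof.
move=> Gx; elim/last_ind => [|U V IH] compU L modL eL.
  by rewrite big_ord0; apply: cp0; rewrite eL /= mxrank0.
have [compU' modV maxV] := (mx_series_rcons rG U V).1 compU.
rewrite last_rcons in eL; subst L.
have modL' : mxmodule rG (last 0 U).
  have := mx_subseries_module' (size U) (proj1 compU').
  by rewrite -[(0 :: U)`_(size U)]/(nth 0 (0 :: U) (size (0 :: U)).-1) nth_last.
rewrite (cp_submod_split modL' modV Gx); last by case: maxV => /ltmxW.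
rewrite (IH compU' _ modL' erefl).
rewrite -(big_mkord xpredT (fun i => char_poly (series_repr i compU x))).
rewrite size_rcons big_nat_recr //= big_mkord; congr (_ * _).
  apply: eq_bigr => i _.
  apply: cp_section_eq; rewrite /= ?nth_rcons.
    case: (nat_of_ord i) (ltn_ord i) => [|j] //= lt.
    by move: (@nth_rcons _ 0 U V j); rewrite (ltnW lt) => ->.
  by rewrite ltn_ord.
apply: cp_section_eq.
  rewrite -rcons_cons nth_rcons /= ltnSn.
  by rewrite -[(0 :: U)`_(size U)]/(nth 0 (0 :: U) (size (0 :: U)).-1) nth_last.
by rewrite nth_rcons ltnn eqxx.
Qed.

End Series.
Section Tens.
Variable F : fieldType.

Lemma idx_proof m1 m2 (i : 'I_m1) (k : 'I_m2) : (i * m2 + k < m1 * m2)%N.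
Proof.
apply: (@leq_trans (i * m2 + m2)); first by rewrite ltn_add2l.
by rewrite addnC -mulSn leq_mul2r ltn_ord orbT.
Qed.

Definition idx m1 m2 (i : 'I_m1) (k : 'I_m2) : 'I_(m1 * m2) := Ordinal (idx_proof i k).

Lemma idx_inj m1 m2 (i j : 'I_m1) (k l : 'I_m2) : idx i k = idx j l -> i = j /\ k = l.
Proof.
move/(congr1 val) => /= e.
have ek : k = l :> nat.
  by have := congr1 (modn^~ m2) e; rewrite !modnMDl !modn_small.
have m2pos : (0 < m2)%N := leq_ltn_trans (leq0n k) (ltn_ord k).
move: e; rewrite ek => /addIn /eqP; rewrite eqn_mul2r (gtn_eqF m2pos) /= => /eqP e.
by split; apply/val_inj.
Qed.

Lemma idx_surj m1 m2 (x : 'I_(m1 * m2)) : exists i k, x = @idx m1 m2 i k.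
Proof.
have m2pos : (0 < m2)%N.
  by case: m2 x => [|//] x; rewrite muln0 in x; case: x.
have ltx : (x %/ m2 < m1)%N by rewrite ltn_divLR.
exists (Ordinal ltx), (Ordinal (ltn_pmod x m2pos)); apply/val_inj => /=.
exact: divn_eq.
Qed.

Lemma trowE n1 (A : 'rV[F]_n1) m2 n2 (B : 'M[F]_(m2, n2)) k (j : 'I_n1) (l : 'I_n2) :
  trow A B k (idx j l) = A 0 j * B k l.
Proof.
elim: n1 A j => [|n1 IH] A j; first by case: j.
rewrite /=; case: (splitP (j : 'I_(1 + n1))) => [j1 e | j1 e].
  have -> : idx j l = lshift (n1 * n2) l.
    by apply/val_inj; rewrite /= e; case: j1 {e} => [[]].
  rewrite row_mxEl !mxE; congr (A _ _ * _); apply/val_inj => /=.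
  by rewrite e; case: j1 {e} => [[]].
have -> : idx j l = rshift n2 (idx j1 l) by apply/val_inj; rewrite /= e mulSn addnA.
rewrite row_mxEr IH mxE; congr (A _ _ * _); exact/val_inj.
Qed.

Lemma tprodE_entry m1 n1 (A : 'M[F]_(m1, n1)) m2 n2 (B : 'M[F]_(m2, n2))
   (i : 'I_m1) (j : 'I_n1) (k : 'I_m2) (l : 'I_n2) :
  tprod A B (idx i k) (idx j l) = A i j * B k l.
Proof.
elim: m1 A i => [|m1 IH] A i; first by case: i.
rewrite /=; case: (splitP (i : 'I_(1 + m1))) => [i1 e | i1 e].
  have -> : idx i k = lshift (m1 * m2) k.
    by apply/val_inj; rewrite /= e; case: i1 {e} => [[]].
  rewrite col_mxEu trowE !mxE; congr (A _ _ * _); apply/val_inj => /=.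
  by rewrite e; case: i1 {e} => [[]].
have -> : idx i k = rshift m2 (idx i1 k) by apply/val_inj; rewrite /= e mulSn addnA.
rewrite col_mxEd IH mxE; congr (A _ _ * _); exact/val_inj.
Qed.

End Tens.
Section Brauer.
Variable F : closedFieldType.
Variable phi : F -> algC.

Definition bsum n (M : 'M[F]_n) : algC := \sum_(z <- ev M) phi z.

Lemma bsum_cp n1 n2 (M1 : 'M[F]_n1) (M2 : 'M[F]_n2) :
  char_poly M1 = char_poly M2 -> bsum M1 = bsum M2.
Proof.
move=> e; rewrite /bsum; apply: perm_big; apply: ev_perm; rewrite e; exact: evE.
Qed.

Lemma bsum_diagonal n (M : 'M[F]_n) : is_diag_mx M -> bsum M = \sum_(x < n) phi (M x x).
Proof.
move=> dM; rewrite /bsum (perm_big [seq M x x | x <- enum 'I_n]).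
  by rewrite big_map big_enum.
apply: ev_perm; rewrite char_poly_trig ?is_diag_mx_is_trig //.
by rewrite big_map big_enum.
Qed.

Lemma bsum_diag n (a : 'rV[F]_n) : bsum (diag_mx a) = \sum_(i < n) phi (a 0 i).
Proof.
rewrite bsum_diagonal ?diag_mx_is_diag //.
by apply: eq_bigr => i _; rewrite mxE eqxx mulr1n.
Qed.

Lemma tprod_diag_is_diag m1 m2 (a : 'rV[F]_m1) (b : 'rV[F]_m2) :
  is_diag_mx (tprod (diag_mx a) (diag_mx b)).
Proof.
apply/is_diag_mxP => x y nxy.
have [i [k ex]] := idx_surj x; have [j [l eyl]] := idx_surj y; rewrite ex eyl.
rewrite tprodE_entry !mxE.
have [eij|nij] := eqVneq i j; last by rewrite mulr0n mul0r.
have [ekl|nkl] := eqVneq k l; last by rewrite mulr0n mulr0.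
by move: nxy; rewrite ex eyl eij ekl eqxx.
Qed.

Lemma bsum_tprod_diag m1 m2 (a : 'rV[F]_m1) (b : 'rV[F]_m2) :
  bsum (tprod (diag_mx a) (diag_mx b)) = \sum_(i < m1) \sum_(k < m2) phi (a 0 i * b 0 k).
Proof.
rewrite bsum_diagonal ?tprod_diag_is_diag // pair_big /=.
have hbij : {on [pred x | true], bijective (fun p : 'I_m1 * 'I_m2 => idx p.1 p.2)}.
  apply: onW_bij; apply: inj_card_bij; last by rewrite card_prod !card_ord.
  by move=> [i k] [j l] /= /idx_inj [-> ->].
rewrite (reindex _ hbij) /=; apply: eq_bigr => [[i k]] _ /=.
by rewrite tprodE_entry !mxE !eqxx !mulr1n.
Qed.

End Brauer.
Section Diag.
Variable F : closedFieldType.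
Variable phi : F -> algC.

Lemma unity_eigen n (M : 'M[F]_n) (v : 'rV[F]_n) c k :
  M ^+ k = 1 -> v *m M = c *: v -> v != 0 -> c ^+ k = 1.
Proof.
move=> Mk Hv nzv.
have H j : v *m M ^+ j = c ^+ j *: v.
  elim: j => [|j IH]; first by rewrite !expr0 mulmx1 scale1r.
  by rewrite exprSr -mulmxE mulmxA IH -scalemxAl Hv scalerA -exprSr.
move: (H k); rewrite Mk mulmx1 => /eqP; rewrite -subr_eq0 -{1}[v]scale1r -scalerBl.
rewrite scalemx_eq0 (negPf nzv) orbF subr_eq0 => /eqP <-.
by [].
Qed.

Lemma diag_decomp d (M : 'M[F]_d) k : (0 < k)%N -> M ^+ k = 1 -> k%:R != 0 :> F ->
  exists P (a : 'rV[F]_d), P \in unitmx /\ M = invmx P *m diag_mx a *m P.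
Proof.
move=> kpos Mk kF.
case: d M Mk => [|d] M Mk.
  by exists 1%:M, 0; split; [exact: unitmx1 | apply/matrixP => [[]]].
have [r Hr] := closed_field_poly_normal ('X^k - 1 : {poly F}).
rewrite (monicP (monic_Xn_sub_1 _ kpos)) scale1r in Hr.
have ur : uniq r by rewrite -separable_prod_XsubC -Hr separable_Xn_sub_1.
have dv : mxminpoly M %| \prod_(x <- r) ('X - x%:P).
  rewrite -Hr; apply: mxminpoly_min.
  by rewrite rmorphB /= rmorphXn /= horner_mx_X rmorph1 Mk subrr.
have [P Pu dP] := (mxpoly.diagonalizableP M).2 (ex_intro2 _ _ r ur dv).
have [D sD] := diagonalizable_forPex dP.
exists P, D; split => //.
by rewrite (simmxLR Pu sD) mxpoly.conjVmx.
Qed.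

Lemma delta_neq0 n (i : 'I_n) : delta_mx 0 i != 0 :> 'rV[F]_n.
Proof.
apply/eqP => /matrixP /(_ 0 i); rewrite !mxE !eqxx /=.
by move/eqP; rewrite oner_eq0.
Qed.

Lemma diag_unity d (M : 'M[F]_d) P (a : 'rV[F]_d) k i :
  M ^+ k = 1 -> P \in unitmx -> M = invmx P *m diag_mx a *m P -> a 0 i ^+ k = 1.
Proof.
move=> Mk Pu eM.
apply: (unity_eigen (v := delta_mx 0 i *m P) Mk).
  by rewrite eM !mulmxA (mulmxK Pu) -[delta_mx 0 i *m diag_mx a]rowE row_diag_mx -scalemxAl.
apply: contraNneq (delta_neq0 i) => H.
by rewrite -(mulmxK Pu (delta_mx 0 i)) H mul0mx.
Qed.

Lemma bsum_conj d (M : 'M[F]_d) P (a : 'rV[F]_d) :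
  P \in unitmx -> M = invmx P *m diag_mx a *m P -> bsum phi M = \sum_(i < d) phi (a 0 i).
Proof.
move=> Pu eM; rewrite -bsum_diag; apply: bsum_cp; symmetry.
apply: (cp_sim (P := P)) => //; first by rewrite row_free_unit.
by rewrite eM !mulmxA mulmxV // mul1mx.
Qed.

Lemma bsum_tprod d1 d2 (M1 : 'M[F]_d1) (M2 : 'M[F]_d2) k :
  (0 < k)%N -> M1 ^+ k = 1 -> M2 ^+ k = 1 -> k%:R != 0 :> F ->
  (forall x y : F, x ^+ k = 1 -> y ^+ k = 1 -> phi (x * y) = phi x * phi y) ->
  bsum phi (tprod M1 M2) = bsum phi M1 * bsum phi M2.
Proof.
move=> kpos M1k M2k kF phiM.
have [P [a [Pu eM1]]] := diag_decomp kpos M1k kF.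
have [Q [b [Qu eM2]]] := diag_decomp kpos M2k kF.
rewrite (bsum_conj Pu eM1) (bsum_conj Qu eM2).
set R := tprod P Q; set Ri := tprod (invmx P) (invmx Q).
have RiR : Ri *m R = 1%:M by rewrite /Ri /R -tprodE !mulVmx // tprod1.
have RRi : R *m Ri = 1%:M by apply: mulmx1C.
have Ru : R \in unitmx by case: (mulmx1_unit RRi).
have -> : bsum phi (tprod M1 M2) = bsum phi (tprod (diag_mx a) (diag_mx b)).
  apply: bsum_cp; symmetry; apply: (cp_sim (P := R)) => //.
    by rewrite row_free_unit.
  by rewrite eM1 eM2 !tprodE -/R -/Ri !mulmxA RRi mul1mx.
rewrite bsum_tprod_diag mulr_suml; apply: eq_bigr => i _.
rewrite mulr_sumr; apply: eq_bigr => j _; apply: phiM.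
  exact: (diag_unity _ M1k Pu eM1).
exact: (diag_unity _ M2k Qu eM2).
Qed.

End Diag.
Definition dec (P : Prop) : bool := if excluded_middle_informative P then true else false.
Lemma decP (P : Prop) : reflect P (dec P).
Proof. by rewrite /dec; case: excluded_middle_informative => h; constructor. Qed.

Section Rep.
Variables (F : closedFieldType) (phi : F -> algC) (gT : finGroupType) (G : {group gT}).

Lemma cp_rsim k1 k2 (r1 : mx_representation F G k1) (r2 : mx_representation F G k2) x :
  x \in G -> mx_rsim r1 r2 -> char_poly (r1 x) = char_poly (r2 x).
Proof. by move=> Gx [B e fB H]; apply: (cp_sim (P := B)) => //; rewrite H. Qed.

Lemma bc_rsim k1 k2 (r1 : mx_representation F G k1) (r2 : mx_representation F G k2) x :
  x \in G -> mx_rsim r1 r2 -> brauer_char phi r1 x = brauer_char phi r2 x.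
Proof. by move=> Gx h; apply: bsum_cp; apply: cp_rsim. Qed.

Lemma bc_series n (rW : mx_representation F G n) U (compU : mx_composition_series rW U) x :
  x \in G -> (last 0 U :=: 1%:M)%MS ->
  brauer_char phi rW x = \sum_(i < size U) brauer_char phi (series_repr i compU) x.
Proof.
move=> Gx lastU.
have modL : mxmodule rW (last 0 U).
  have := mx_subseries_module' (size U) (proj1 compU).
  by rewrite -[(0 :: U)`_(size U)]/(nth 0 (0 :: U) (size (0 :: U)).-1) nth_last.
have e1 := cp_rsim Gx (rsim_submod1 modL lastU).
rewrite (@cp_series _ _ _ _ rW x Gx U compU _ modL erefl) in e1.
rewrite /brauer_char.
rewrite (perm_big (flatten [seq ev (series_repr i compU x) | i : 'I_(size U) <- enum 'I_(size U)])).
  by rewrite big_flatten big_map big_enum.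
apply: (ev_perm (M := rW x)); rewrite -e1 big_flatten /= big_map big_enum.
by apply: eq_bigr => i _; exact: evE.
Qed.

Lemma card_sum N (A : {set 'I_N}) (Q : 'I_N -> bool) :
  (forall i, i \in A <-> Q i) -> #|A| = (\sum_(i < N) (Q i : nat))%N.
Proof.
move=> HA; rewrite -sum1_card big_mkcond /=; apply: eq_bigr => i _.
have -> : (i \in A) = Q i by apply/idP/idP => /HA.
by case: (Q i).
Qed.

Lemma comp_mult_count n (rW : mx_representation F G n) U
   (compU : mx_composition_series rW U) (lastU : (last 0 U :=: 1%:M)%MS)
   k (rS : mx_representation F G k) :
  comp_mult rW rS = (\sum_(i < size U) (dec (mx_rsim (series_repr i compU) rS) : nat))%N.
Proof.
have Hex : is_comp_mult rW rS (\sum_(i < size U) (dec (mx_rsim (series_repr i compU) rS) : nat)).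
  exists U, compU; split => //.
  exists [set i : 'I_(size U) | dec (mx_rsim (series_repr i compU) rS)]; split.
    by apply: card_sum => i; rewrite inE.
  by move=> i; rewrite inE; split => /decP.
have := epsilon_spec (inhabits 0%N) (is_comp_mult rW rS) (ex_intro _ _ Hex).
rewrite -/(comp_mult rW rS).
case=> U' [compU' [lastU' [A' [cardA' HA']]]].
rewrite -cardA' (card_sum (Q := fun i => dec (mx_rsim (series_repr i compU') rS))); last first.
  by move=> i; rewrite HA'; split => /decP.
have [eN [p Hp]] := mx_JordanHolder compU compU' (eqmx_trans lastU (eqmx_sym lastU')).
rewrite -(big_mkord xpredT (fun i => (dec (mx_rsim (series_repr i compU') rS) : nat))).
rewrite -eN big_mkord (reindex_inj (@perm_inj _ p)) /=.
apply: eq_bigr => i _; congr nat_of_bool.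
apply/decP/decP => h.
  exact: mx_rsim_trans (Hp i) h.
exact: mx_rsim_trans (mx_rsim_sym (Hp i)) h.
Qed.

End Rep.

Lemma pelt_natf (F : fieldType) (gT : finGroupType) (g : gT) :
  p_elt (predC [pchar F]) g -> (#[g]%g)%:R != 0 :> F.
Proof.
move=> pg; apply/negP => k0.
have [p charp] := natf0_pchar (order_gt0 g) k0.
have pk : (p %| #[g]%g)%N by rewrite (dvdn_pcharf charp).
have pp := pcharf_prime charp.
have : p \in predC [pchar F].
  apply: (pnatPpi pg); by rewrite mem_primes pp order_gt0 pk.
by rewrite inE /=; rewrite inE in charp; rewrite charp.
Qed.

Lemma bc_prod (F : closedFieldType) (phi : F -> algC) (gT : finGroupType) (G : {group gT})
   k1 k2 (r1 : mx_representation F G k1) (r2 : mx_representation F G k2) g :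
  g \in G -> p_elt (predC [pchar F]) g ->
  (forall x y : F, x ^+ pprime_order F gT G = 1 -> y ^+ pprime_order F gT G = 1 ->
        phi (x * y) = phi x * phi y) ->
  brauer_char phi (prod_repr r1 r2) g = brauer_char phi r1 g * brauer_char phi r2 g.
Proof.
move=> Gg pg phiM.
have kq : (#[g]%g %| pprime_order F gT G)%N.
  by rewrite /pprime_order -(part_pnat_id pg) partn_dvd ?cardG_gt0 ?order_dvdG.
have unq (z : F) : z ^+ #[g]%g = 1 -> z ^+ pprime_order F gT G = 1.
  by case/dvdnP: kq => c -> zk; rewrite mulnC exprM zk expr1n.
have rk k (r : mx_representation F G k) : r g ^+ #[g]%g = 1.
  case: k r => [|k] r; first by apply/matrixP => [[]].
  by rewrite -(repr_mxX r) // expg_order repr_mx1.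
apply: (bsum_tprod (order_gt0 g) (rk _ r1) (rk _ r2) (pelt_natf pg)).
by move=> x y hx hy; apply: phiM; apply: unq.
Qed.

Unset Implicit Arguments.

Theorem proposition3p4 (F : closedFieldType) (gT : finGroupType) (G : {group gT})
    (l : nat) (S : 'I_l.+1 -> fgmod F G)
    (S_irr : forall i, mx_irreducible (projT2 (S i)))
    (S_noniso : forall i j, i != j -> ~ mx_rsim (projT2 (S i)) (projT2 (S j)))
    (S_all : forall k (rT : mx_representation F G k),
        mx_irreducible rT -> exists i, mx_rsim (projT2 (S i)) rT)
    (phi : F -> algC)
    (phi_M : forall x y : F, x ^+ pprime_order F gT G = 1 -> y ^+ pprime_order F gT G = 1 ->
        phi (x * y) = phi x * phi y)
    (phi_inj : forall x y : F, x ^+ pprime_order F gT G = 1 -> y ^+ pprime_order F gT G = 1 ->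
        phi x = phi y -> x = y)
    (phi_root : forall x : F, x ^+ pprime_order F gT G = 1 -> phi x ^+ pprime_order F gT G = 1)
    (phi_surj : forall z : algC, z ^+ pprime_order F gT G = 1 ->
        exists2 x : F, x ^+ pprime_order F gT G = 1 & phi x = z)
    (n : nat) (rV : mx_representation F G n)
    (g : gT) (Gg : g \in G) (g_preg : p_elt (predC [pchar F]) g) :
  svec phi S g *m MV S rV = brauer_char phi rV g *: svec phi S g /\
  svec phi S g *m LV S rV = (n%:R - brauer_char phi rV g) *: svec phi S g.
Proof.
have part1 : svec phi S g *m MV S rV = brauer_char phi rV g *: svec phi S g.
  apply/rowP => j; rewrite !mxE.
  under eq_bigr => i _ do rewrite !mxE.
  set W := prod_repr (projT2 (S j)) rV.
  have [U [compU lastU _]] : exists U, [/\ mx_composition_series W U,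
        (last 0 U :=: 1%:M)%MS & subseq [::] U].
    apply: NNPP; apply/classicP; apply: mx_Schreier => //.
  rewrite mulrC -(bc_prod _ _ Gg g_preg phi_M) (bc_series phi compU Gg lastU).
  have Hk (k : 'I_(size U)) : brauer_char phi (series_repr k compU) g =
      \sum_(i < l.+1) brauer_char phi (projT2 (S i)) g *
         (dec (mx_rsim (series_repr k compU) (projT2 (S i))) : nat)%:R.
    have [ik Hik] := S_all _ _ (mx_series_repr_irr compU (ltn_ord k)).
    rewrite (bigD1 ik) //= big1 ?addr0 => [|i nik].
      have /decP -> : mx_rsim (series_repr k compU) (projT2 (S ik)) by exact: mx_rsim_sym.
      by rewrite mulr1 (bc_rsim phi Gg Hik).
    case: decP => h; last by rewrite mulr0.
    by case: (S_noniso _ _ nik); exact: mx_rsim_trans (mx_rsim_sym h) (mx_rsim_sym Hik).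
  rewrite [RHS](eq_bigr _ (fun k _ => Hk k)).
  rewrite exchange_big /=; apply: eq_bigr => i _.
  by rewrite -mulr_sumr -natr_sum (comp_mult_count compU lastU).
split => //.
by rewrite /LV mulmxBr mul_mx_scalar part1 scalerBl.
Qed.
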